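(* Let $T$ be a nonabelian finite simple group and let $A,B,C$ be pairwise distinct proper subgroups of $T$ forming a strong multiple factorisation, i.e. $T=A(B\cap C)=B(C\cap A)=C(A\cap B)$. Let $M=T^3$, $G=T\wr C_3=M\rtimes C_3$, where $C_3$ is generated by the cyclic coordinate shift $(t_1,t_2,t_3)\mapsto(t_2,t_3,t_1)$, and let $K_1=A\times B\times C$, $K_2=B\times C\times A$, $K_3=C\times A\times B$. Then $K_1\cap K_2\cap K_3=(A\cap B\cap C)^3$ is normalised by $C_3$; $G$ acts transitively on the coset space $\Omega$ of $H=(K_1\cap K_2\cap K_3)\rtimes C_3$, with $M$ a transitive minimal normal subgroup; and for $\omega=H$: (a) $\{K_1,K_2,K_3\}$ is a Cartesian system of subgroups in $M$ with respect to $\omega$ which is not $M$-normal and has $|\mathcal F_i|=3$; (b) $\{(A\cap B\cap C)\times T\times T,\ T\times(A\cap B\cap C)\times T,\ T\times T\times(A\cap B\cap C)\}$ is also a Cartesian system of subgroups in $M$ with respect to $\omega$, and it is $M$-normal.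
   Context: For $G$ innately transitive on $\Omega$ (i.e. with a transitive minimal normal subgroup, a plinth) with plinth $M$ and $\omega\in\Omega$, a Cartesian system of subgroups in $M$ with respect to $\omega$ is a $G_\omega$-conjugation-invariant set $\{K_1,\ldots,K_\ell\}$ of subgroups of $M$ with $\bigcap_i K_i=M_\omega$ and $K_i\bigl(\bigcap_{j\ne i}K_j\bigr)=M$ for all $i$. It is $M$-normal if there are normal subgroups $M_1,\ldots,M_\ell$ of $M$ with $M=M_1\times\cdots\times M_\ell$ and $K_i=(M_i\cap M_\omega)\times\prod_{j\ne i}M_j$ for all $i$. For $M=T_1\times\cdots\times T_k$ with simple factors $T_i$ and projections $\sigma_i:M\to T_i$, $\mathcal F_i=\{\sigma_i(K_j):\sigma_i(K_j)\ne T_i\}$. *)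

(* Defs.v *)
From mathcomp Require Import all_boot all_fingroup all_solvable.
Set Implicit Arguments. Unset Strict Implicit. Unset Printing Implicit Defensive.
Import GroupScope.

(* Cartesian systems of subgroups (paper's definition).
   M : the plinth, Gw : the point stabiliser G_omega, Mw : M_omega,
   Ks : the set {K_1,...,K_l} of subgroups of M. *)
Definition cartesian_system (gT : finGroupType) (M Gw Mw : {set gT})
    (Ks : {set {set gT}}) : Prop :=
  [/\ forall K, K \in Ks -> group_set K /\ K \subset M,
      forall g K, g \in Gw -> K \in Ks -> K :^ g \in Ks,
      \bigcap_(K in Ks) K = Mw &
      forall K, K \in Ks -> K * (M :&: \bigcap_(J in Ks | J != K) J) = M].

Definition M_normal (gT : finGroupType) (M Mw : {set gT})
    (Ks : {set {set gT}}) : Prop :=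
  exists Mi : {set gT} -> {set gT},
    [/\ forall K, K \in Ks -> group_set (Mi K) /\ Mi K <| M,
        \big[dprod/1]_(K in Ks) Mi K = M &
        forall K, K \in Ks -> K = (Mi K :&: Mw) * (\prod_(J in Ks | J != K) Mi J)].

Definition cube3 (gT : finGroupType) := (gT * gT * gT)%type.

Definition coord (gT : finGroupType) (i : 'I_3) (p : cube3 gT) : gT :=
  if (val i == 0)%N then p.1.1 else if (val i == 1)%N then p.1.2 else p.2.

(* Faithful copy of T^3 and T wr C_3 inside Sym(T^3): M acts by right
   multiplication (right regular representation rr), and C_3 is generated
   by the coordinate shift (t1,t2,t3) |-> (t2,t3,t1); conjugation by this
   shift induces exactly the shift automorphism on rr(T^3). *)
Notation rr gT := (actperm (@mulgr_action (cube3 gT))).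

Definition shift_fun (gT : finGroupType) (p : cube3 gT) : cube3 gT :=
  (p.1.2, p.2, p.1.1).

Lemma shift_fun_inj (gT : finGroupType) : injective (@shift_fun gT).
Proof.
move=> [[a b] c] [[a' b'] c'] /= [-> -> ->]; by [].
Qed.

Definition shift (gT : finGroupType) : {perm cube3 gT} := perm (@shift_fun_inj gT).

Definition sigma (gT : finGroupType) (i : 'I_3) (K : {set {perm cube3 gT}}) : {set gT} :=
  [set coord i p | p in rr gT @*^-1 K].

Definition Fsys (gT : finGroupType) (T : {set gT}) (i : 'I_3)
    (Ks : {set {set {perm cube3 gT}}}) : {set {set gT}} :=
  [set sigma i K | K in Ks & sigma i K != T].

(* Main.v *)
Require Import Defs.
From mathcomp Require Import all_boot all_fingroup all_solvable.
Import GroupScope.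
Set Implicit Arguments. Unset Strict Implicit. Unset Printing Implicit Defensive.
Section S.
Variable gT : finGroupType.
Implicit Types X Y Z : {set gT}.
Notation P3 X Y Z := (setX (setX X Y) Z).
Notation f := (rr gT).
Notation c := (shift gT).
Notation sf := (@shift_fun gT).

Lemma inP3 X Y Z (x : cube3 gT) : (x \in P3 X Y Z) = [&& x.1.1 \in X, x.1.2 \in Y & x.2 \in Z].
Proof. by case: x => [[a b] d]; rewrite !in_setX andbA. Qed.

Lemma P3I X Y Z X' Y' Z' : P3 X Y Z :&: P3 X' Y' Z' = P3 (X :&: X') (Y :&: Y') (Z :&: Z').
Proof. apply/setP=> x; rewrite inE !inP3 !inE.
by do !case: (_ \in _). Qed.

Lemma P3M X Y Z X' Y' Z' : P3 X Y Z * P3 X' Y' Z' = P3 (X * X') (Y * Y') (Z * Z').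
Proof.
apply/setP=> x; apply/mulsgP/idP.
  case=> u v; rewrite !inP3 => /and3P[u1 u2 u3] /and3P[v1 v2 v3] ->.
  by rewrite !mem_mulg.
rewrite inP3 => /and3P[/mulsgP[a1 b1 X1 Y1 e1] /mulsgP[a2 b2 X2 Y2 e2] /mulsgP[a3 b3 X3 Y3 e3]].
exists ((a1,a2),a3) ((b1,b2),b3); rewrite ?inP3 /= ?X1 ?X2 ?X3 ?Y1 ?Y2 ?Y3 //.
by case: x e1 e2 e3 => [[? ?] ?] /= -> -> ->.
Qed.

Lemma rrE (x p : cube3 gT) : f x p = p * x.
Proof. by rewrite actpermE. Qed.

Lemma rr_injm : 'injm f.
Proof. apply/injmP=> x y _ _ e. by have := congr1 (fun s : {perm _} => s 1) e; rewrite !rrE !mul1g. Qed.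

Lemma shift_mul (x y : cube3 gT) : shift_fun (x * y) = shift_fun x * shift_fun y.
Proof. by case: x y => [[? ?] ?] [[? ?] ?]. Qed.

Lemma rr_conj (x : cube3 gT) : f x ^ c = f (shift_fun x).
Proof.
apply/permP=> p; rewrite /conjg !permM rrE.
rewrite -{2}(permKV c p); set q := (c^-1)%g p.
by rewrite !permE shift_mul.
Qed.
Lemma rr_conjs (A : {set cube3 gT}) : (f @* A) :^ c = f @* (sf @: A).
Proof.
rewrite !morphimEsub ?subsetT // /conjugate -!imset_comp; apply: eq_imset => x /=.
exact: rr_conj.
Qed.

Lemma shiftP3 X Y Z : sf @: P3 X Y Z = P3 Y Z X.
Proof.
apply/setP => x; apply/imsetP/idP.
  case=> y; rewrite !inP3; case: y => [[a b] d] /and3P[? ? ?] ->.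
  by rewrite /shift_fun /=; apply/and3P.
case: x => [[a b] d]; rewrite inP3 => /and3P[? ? ?]; exists ((d,a),b) => //.
by rewrite inP3; apply/and3P.
Qed.

Lemma conjP3 X Y Z : (f @* P3 X Y Z) :^ c = f @* P3 Y Z X.
Proof. by rewrite rr_conjs shiftP3. Qed.

Lemma P3_eq (X Y Z X' Y' Z' : {group gT}) :
  P3 X Y Z = P3 X' Y' Z' -> [/\ X :=: X', Y :=: Y' & Z :=: Z'].
Proof.
move=> e; have E p : (p \in P3 X Y Z) = (p \in P3 X' Y' Z') by rewrite e.
split; apply/setP=> x.
- by move: (E ((x,1),1)); rewrite !inP3 /= !group1 !andbT.
- by move: (E ((1,x),1)); rewrite !inP3 /= !group1 /= !andbT.
- by move: (E ((1,1),x)); rewrite !inP3 /= !group1.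
Qed.

Lemma rrP3_eq (X Y Z X' Y' Z' : {group gT}) :
  f @* P3 X Y Z = f @* P3 X' Y' Z' -> [/\ X :=: X', Y :=: Y' & Z :=: Z'].
Proof. by move/eqP; rewrite injm_eq ?subsetT ?rr_injm // => /eqP/P3_eq. Qed.

Lemma sigmaP3 (X Y Z : {group gT}) (i : 'I_3) :
  sigma i (f @* P3 X Y Z) = if val i == 0%N then gval X else if val i == 1%N then gval Y else gval Z.
Proof.
rewrite /sigma injmK ?subsetT ?rr_injm //.
case: i => [[|[|[|i]]] Hi] //=; apply/setP=> x; apply/imsetP/idP.
- by case=> p; rewrite inP3 /coord /= => /and3P[? ? ?] ->.
- by move=> Xx; exists ((x,1),1); rewrite // inP3 /= Xx !group1.
- by case=> p; rewrite inP3 /coord /= => /and3P[? ? ?] ->.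
- by move=> Xx; exists ((1,x),1); rewrite // inP3 /= Xx !group1.
- by case=> p; rewrite inP3 /coord /= => /and3P[? ? ?] ->.
- by move=> Xx; exists ((1,1),x); rewrite // inP3 /= Xx !group1.
Qed.

Lemma pair_mul (a b d a' b' d' : gT) : ((a,b),d) * ((a',b'),d') = ((a*a',b*b'),d*d').
Proof. by []. Qed.
Lemma pair_inv (a b d : gT) : ((a,b),d)^-1 = ((a^-1,b^-1),d^-1).
Proof. by []. Qed.
Lemma pair_one : (1 : cube3 gT) = ((1,1),1).
Proof. by []. Qed.

Section Simple.
Variable T : {group gT}.
Hypothesis simT : simple T.
Hypothesis nabT : ~~ abelian T.

Lemma noncentral a : a \in T -> a != 1 -> exists2 t, t \in T & a * t != t * a.
Proof.
move=> Ta a1.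
case: (pickP [pred t in T | a * t != t * a]) => [t /andP[Tt nc] | none].
  by exists t.
exfalso.
have aZ : a \in 'Z(T).
  rewrite inE Ta /=; apply/centP => t Tt; move: (none t); rewrite /= Tt /=.
  by move/negbFE/eqP.
case/simpleP: simT => _ /(_ _ (center_normal T)) [Z1|ZT].
  by move: aZ; rewrite Z1 inE (negbTE a1).
by move/negP: nabT; apply; rewrite /abelian -{1}ZT subsetIr.
Qed.

Lemma PKgen (N : {group cube3 gT}) (e : gT -> cube3 gT) (pr : cube3 gT -> gT) :
  (forall z w, e (z * w) = e z * e w) ->
  (forall x t, x^-1 * (x ^ e t) = e ((pr x)^-1 * ((pr x ^ t)))) ->
  (forall z, z \in T -> e z \in P3 T T T) ->
  N <| P3 T T T -> forall x, x \in N -> pr x \in T -> pr x != 1 -> e @: T \subset N.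
Proof.
move=> eM eC eT /andP[NP nNP] x Nx Tp p1.
have e1 : e 1 = 1 by apply: (@mulgI _ (e 1)); rewrite -eM !mulg1.
have eV z : e z^-1 = (e z)^-1 by apply/esym/eqP; rewrite eq_invg_mul -eM mulgV e1.
have eJ z u : e (z ^ u) = e z ^ e u by rewrite /conjg !eM eV.
have [t Tt nc] := noncentral Tp p1.
pose S := [set z in T | e z \in N].
have gS : group_set S.
  apply/group_setP; split; first by rewrite inE group1 e1 group1.
  move=> z w; rewrite !inE => /andP[Tz Nz] /andP[Tw Nw].
  by rewrite groupM // eM groupM.
have nST : T \subset 'N(S).
  apply/subsetP => u Tu; rewrite inE; apply/subsetP => y /imsetP[z].
  rewrite inE => /andP[Tz Nz] ->; rewrite inE groupJ // eJ memJ_norm //.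
  exact: (subsetP nNP) _ (eT u Tu).
have nS : (Group gS) <| T.
  by rewrite /normal nST andbT; apply/subsetP => z; rewrite inE => /andP[].
case/simpleP: simT => _ /(_ _ nS) [S1|ST].
  have kS : (pr x)^-1 * ((pr x ^ t)) \in S.
    have kT : (pr x)^-1 * (pr x ^ t) \in T by apply: groupM; [rewrite groupV | apply: groupJ].
    rewrite inE kT /=.
    rewrite -eC groupM ?groupV ?memJ_norm //.
    exact: (subsetP nNP) _ (eT t Tt).
  move: kS; rewrite -[S]/(gval (Group gS)) S1 inE => /eqP k1.
  case/negP: nc; apply/eqP.
  have : (pr x ^ t) = pr x by apply: (@mulgI _ (pr x)^-1); rewrite k1 mulVg.
  by rewrite /conjg => ee; rewrite -{2}ee !mulgA mulgV mul1g.
apply/subsetP => y /imsetP[z Tz ->].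
by move: Tz; rewrite -ST inE => /andP[].
Qed.
Lemma PK1 (N : {group cube3 gT}) : N <| P3 T T T -> forall x, x \in N -> x.1.1 != 1 ->
  forall z, z \in T -> ((z,1),1) \in N.
Proof.
move=> nN x Nx x1 z Tz.
have Tx : x.1.1 \in T.
  by move: (subsetP (normal_sub nN) x Nx); rewrite inP3 => /and3P[].
apply: (subsetP (PKgen (e := fun z => ((z,1),1)) (pr := fun x => x.1.1) _ _ _ nN Nx Tx x1)).
- by move=> u v; rewrite pair_mul !mulg1.
- move=> [[a b] d] t; rewrite /conjg /= !pair_inv !pair_mul !invg1 !mulg1 !mul1g !mulVg.
  by [].
- by move=> u Tu; rewrite inP3 /= Tu !group1.
- by apply: imset_f.
Qed.

Lemma PK2 (N : {group cube3 gT}) : N <| P3 T T T -> forall x, x \in N -> x.1.2 != 1 ->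
  forall z, z \in T -> ((1,z),1) \in N.
Proof.
move=> nN x Nx x1 z Tz.
have Tx : x.1.2 \in T.
  by move: (subsetP (normal_sub nN) x Nx); rewrite inP3 => /and3P[].
apply: (subsetP (PKgen (e := fun z => ((1,z),1)) (pr := fun x => x.1.2) _ _ _ nN Nx Tx x1)).
- by move=> u v; rewrite pair_mul !mulg1.
- move=> [[a b] d] t; rewrite /conjg /= !pair_inv !pair_mul !invg1 !mulg1 !mul1g !mulVg.
  by [].
- by move=> u Tu; rewrite inP3 /= Tu !group1.
- by apply: imset_f.
Qed.

Lemma PK3 (N : {group cube3 gT}) : N <| P3 T T T -> forall x, x \in N -> x.2 != 1 ->
  forall z, z \in T -> ((1,1),z) \in N.
Proof.
move=> nN x Nx x1 z Tz.
have Tx : x.2 \in T.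
  by move: (subsetP (normal_sub nN) x Nx); rewrite inP3 => /and3P[].
apply: (subsetP (PKgen (e := fun z => ((1,1),z)) (pr := fun x => x.2) _ _ _ nN Nx Tx x1)).
- by move=> u v; rewrite pair_mul !mulg1.
- move=> [[a b] d] t; rewrite /conjg /= !pair_inv !pair_mul !invg1 !mulg1 !mul1g !mulVg.
  by [].
- by move=> u Tu; rewrite inP3 /= Tu !group1.
- by apply: imset_f.
Qed.

Lemma Ktriv (N : {group cube3 gT}) (X Y Z : {set gT}) : N <| P3 T T T ->
  N \subset P3 X Y Z -> ~~ (T \subset X) -> ~~ (T \subset Y) -> ~~ (T \subset Z) ->
  N :=: 1.
Proof.
move=> nN sN nX nY nZ; apply/trivgP/subsetP => x Nx; rewrite inE.
case: x Nx => [[a b] d] Nx.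
have [a1|a1] := eqVneq a 1; last first.
  case/negP: nX; apply/subsetP => z Tz.
  by move: (subsetP sN _ (PK1 nN Nx a1 Tz)); rewrite inP3 => /and3P[].
have [b1|b1] := eqVneq b 1; last first.
  case/negP: nY; apply/subsetP => z Tz.
  by move: (subsetP sN _ (PK2 nN Nx b1 Tz)); rewrite inP3 => /and3P[].
have [d1|d1] := eqVneq d 1; last first.
  case/negP: nZ; apply/subsetP => z Tz.
  by move: (subsetP sN _ (PK3 nN Nx d1 Tz)); rewrite inP3 => /and3P[].
by rewrite a1 b1 d1.
Qed.
Lemma Kfull (N : {group cube3 gT}) : N <| P3 T T T -> N :!=: 1 ->
  (forall x, x \in N -> sf x \in N) -> P3 T T T \subset N.
Proof.
move=> nN ntN sN.
have [x Nx x1] := trivgPn _ ntN.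
have [a Ta a1] : exists2 a, a \in T & a != 1 by case/simpleP: simT => /trivgPn.
have H1 : forall z, z \in T -> ((z,1),1) \in N.
  case: x Nx x1 => [[p q] r] Nx x1.
  have [p1|p1] := eqVneq p 1; last by move=> z Tz; have := @PK1 N nN _ Nx p1 z Tz.
  have [q1|q1] := eqVneq q 1; last exact: (PK1 nN (sN _ Nx) q1).
  have [r1|r1] := eqVneq r 1; last exact: (PK1 nN (sN _ (sN _ Nx)) r1).
  by case/eqP: x1; rewrite p1 q1 r1.
have H3 := PK3 nN (sN _ (H1 a Ta)) a1.
have H2 := PK2 nN (sN _ (sN _ (H1 a Ta))) a1.
apply/subsetP => -[[p q] r]; rewrite inP3 /= => /and3P[Tp Tq Tr].
have -> : ((p,q),r) = ((p,1),1)*((1,q),1)*((1,1),r) by rewrite !pair_mul !mulg1 !mul1g.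
by rewrite !groupM ?H1 ?H2 ?H3.
Qed.
End Simple.

Lemma pair_conj (a b d a' b' d' : gT) : ((a,b),d) ^ ((a',b'),d') = ((a^a',b^b'),d^d').
Proof. by []. Qed.

Lemma P3_1 : P3 1 1 1 = 1 :> {set cube3 gT}.
Proof.
apply/setP => -[[a b] d]; rewrite inP3 !inE /=.
apply/idP/idP => [/and3P[/eqP-> /eqP-> /eqP->] | /eqP]; first exact: eqxx.
by rewrite pair_one => -[-> -> ->]; rewrite !eqxx.
Qed.

Lemma centP3 X Y Z X' Y' Z' : X \subset 'C(X') -> Y \subset 'C(Y') -> Z \subset 'C(Z') ->
  P3 X Y Z \subset 'C(P3 X' Y' Z').
Proof.
move=> /centsP cX /centsP cY /centsP cZ; apply/centsP => -[[a b] d] + [[a' b'] d'].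
rewrite !inP3 /= => /and3P[Xa Yb Zd] /and3P[Xa' Yb' Zd'].
by rewrite /commute !pair_mul (cX a Xa a' Xa') (cY b Yb b' Yb') (cZ d Zd d' Zd').
Qed.

Lemma normalP3 (T X Y Z : {group gT}) : X <| T -> Y <| T -> Z <| T -> P3 X Y Z <| P3 T T T.
Proof.
move=> /andP[sX nX] /andP[sY nY] /andP[sZ nZ]; apply/andP; split; first by rewrite !setXS.
apply/subsetP => -[[a b] d]; rewrite inP3 /= => /and3P[Ta Tb Td]; rewrite inE.
apply/subsetP => y /imsetP[[[p q] r]]; rewrite inP3 /= => /and3P[Xp Yq Zr] ->.
have nXa := subsetP nX a Ta; have nYb := subsetP nY b Tb; have nZd := subsetP nZ d Td.
by rewrite pair_conj inP3 /= !memJ_norm // Xp Yq Zr.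
Qed.

Lemma cpow_in (X : {set cube3 gT}) n : c ^+ n \in f @* X -> c ^+ n = 1.
Proof.
case/morphimP => y _ _ e.
have c1 : c 1 = 1 by rewrite permE.
have : (c ^+ n) 1 = 1 by rewrite permX_fix.
move=> H; move: H; rewrite [in X in X -> _]e rrE mul1g => y1.
by rewrite e y1 morph1.
Qed.

Lemma pullback_normal (N : {set {perm cube3 gT}}) (T : {group gT}) :
  N <| f @* P3 T T T -> f @*^-1 N <| P3 T T T.
Proof.
move=> nN; have sT : f @* P3 T T T \subset f @* setT by apply: morphimS; apply: subsetT.
rewrite -(injmK (rr_injm) (subsetT (P3 T T T))) morphpre_normal //.
exact: subset_trans (normal_sub nN) sT.
Qed.

Lemma Mtriv (N : {set {perm cube3 gT}}) (T X Y Z : {group gT}) :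
  simple T -> ~~ abelian T -> group_set N -> N <| f @* P3 T T T ->
  N \subset f @* P3 X Y Z -> ~~ (T \subset X) -> ~~ (T \subset Y) -> ~~ (T \subset Z) ->
  N = 1.
Proof.
move=> simT nabT gN nN sN nX nY nZ.
have nN' := pullback_normal nN.
have sN' : f @*^-1 N \subset P3 X Y Z.
  by rewrite -(injmK rr_injm (subsetT (P3 X Y Z))) morphpreS.
have e := @Ktriv T simT nabT (f @*^-1 (Group gN))%G _ _ _ nN' sN' nX nY nZ.
have sND : N \subset f @* setT.
  by apply: subset_trans (normal_sub nN) _; apply: morphimS; apply: subsetT.
by rewrite -(morphpreK sND) -[f @*^-1 N]/(gval (f @*^-1 (Group gN))%G) e morphim1.
Qed.

Lemma dprodP3 (X Y Z X' Y' Z' : {group gT}) :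
  P3 X' Y' Z' \subset 'C(P3 X Y Z) -> P3 X Y Z :&: P3 X' Y' Z' = 1 ->
  f @* P3 X Y Z \x f @* P3 X' Y' Z' = f @* P3 (X * X') (Y * Y') (Z * Z').
Proof.
move=> cP iP; rewrite dprodE ?morphim_cents //; last first.
  by rewrite -injmI ?rr_injm // iP morphim1.
by rewrite -morphimMl ?subsetT // P3M.
Qed.

Lemma cprodP3 (X Y Z X' Y' Z' : {group gT}) :
  P3 X' Y' Z' \subset 'C(P3 X Y Z) ->
  f @* P3 X Y Z \* f @* P3 X' Y' Z' = f @* P3 (X * X') (Y * Y') (Z * Z').
Proof.
move=> cP; rewrite cprodE ?morphim_cents //.
by rewrite -morphimMl ?subsetT // P3M.
Qed.
End S.
Section Generic.
Variable rT : finGroupType.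
Implicit Types X Y Z M : {set rT}.

Lemma one_prod_seq (I : eqType) (s : seq I) (F : I -> {set rT}) :
  {in s, forall i, 1 \in F i} -> 1 \in \prod_(i <- s) F i.
Proof.
elim: s => [|a s IH] F1; first by rewrite big_nil inE.
rewrite big_cons -[1]mulg1 mem_mulg ?F1 ?mem_head // IH // => i si.
by rewrite F1 // inE si orbT.
Qed.

Lemma sub_prod_seq (I : eqType) (s : seq I) (F : I -> {set rT}) j :
  {in s, forall i, 1 \in F i} -> j \in s -> F j \subset \prod_(i <- s) F i.
Proof.
elim: s => [|a s IH] F1 //; rewrite big_cons inE => /orP[/eqP->|js].
  apply/subsetP => x Fx; rewrite -[x]mulg1 mem_mulg // one_prod_seq // => i si.
  by rewrite F1 // inE si orbT.
apply/subsetP => x Px; rewrite -[x]mul1g mem_mulg ?F1 ?mem_head //.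
apply: (subsetP (IH _ js)) Px => i si; by rewrite F1 // inE si orbT.
Qed.

Lemma sub_prod (I : finType) (P : pred I) (F : I -> {set rT}) j :
  (forall i, P i -> 1 \in F i) -> P j -> F j \subset \prod_(i | P i) F i.
Proof.
move=> F1 Pj; rewrite -big_filter; apply: sub_prod_seq.
  by move=> i; rewrite mem_filter => /andP[] /F1.
by rewrite mem_filter Pj mem_index_enum.
Qed.

Lemma bigcap3 X1 X2 X3 : X1 != X2 -> X3 != X1 ->
  \bigcap_(J in [set X1; X2; X3] | J != X1) J = X2 :&: X3.
Proof.
move=> n12 n31; apply/setP => x; apply/bigcapP/idP.
  move=> H; rewrite inE; apply/andP; split; apply: H; rewrite !inE eqxx ?orbT /=; [by rewrite eq_sym | by []].
rewrite inE => /andP[x2 x3] J; rewrite !inE => /andP[H ne].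
case/orP: H => [/orP[]|] /eqP E; rewrite E //.
by rewrite E eqxx in ne.
Qed.

Lemma set3_rot X1 X2 X3 : [set X1; X2; X3] = [set X2; X3; X1].
Proof. by apply/setP => J; rewrite !inE; case: (J == X1); case: (J == X2); case: (J == X3). Qed.

Lemma bigcap_all3 X1 X2 X3 : \bigcap_(J in [set X1; X2; X3]) J = X1 :&: X2 :&: X3.
Proof.
apply/setP => x; apply/bigcapP/idP.
  by move=> H; rewrite !inE !H // !inE eqxx ?orbT.
rewrite !inE => /andP[/andP[x1 x2] x3] J; rewrite !inE.
by case/orP => [/orP[]|] /eqP ->.
Qed.


Lemma conj_closed (Gw Dc : {set rT}) (c : rT) (X1 X2 X3 : {group rT}) :
  Gw \subset Dc * <[c]> -> Dc \subset X1 -> Dc \subset X2 -> Dc \subset X3 ->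
  (forall K, K \in [set gval X1; gval X2; gval X3] -> K :^ c \in [set gval X1; gval X2; gval X3]) ->
  forall g K, g \in Gw -> K \in [set gval X1; gval X2; gval X3] ->
    K :^ g \in [set gval X1; gval X2; gval X3].
Proof.
move=> sG s1 s2 s3 cs.
have cp : forall n K, K \in [set gval X1; gval X2; gval X3] ->
    K :^ (c ^+ n) \in [set gval X1; gval X2; gval X3].
  elim=> [|n IH] K KS; first by rewrite expg0 conjsg1.
  by rewrite expgSr conjsgM cs // IH.
move=> g K /(subsetP sG) /mulsgP[d k Dd /cycleP[n ->] ->] KS.
rewrite conjsgM; suff -> : K :^ d = K by apply: cp.
move: KS; rewrite !inE; case/orP => [/orP[]|] /eqP ->; apply: conjGid.
- exact: (subsetP s1).
- exact: (subsetP s2).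
- exact: (subsetP s3).
Qed.

Lemma cart3 M (Gw : {set rT}) Mw X1 X2 X3 :
  X1 != X2 -> X2 != X3 -> X3 != X1 ->
  group_set X1 -> group_set X2 -> group_set X3 ->
  X1 \subset M -> X2 \subset M -> X3 \subset M ->
  (forall g K, g \in Gw -> K \in [set X1; X2; X3] -> K :^ g \in [set X1; X2; X3]) ->
  X1 :&: X2 :&: X3 = Mw ->
  X1 * (X2 :&: X3) = M -> X2 * (X3 :&: X1) = M -> X3 * (X1 :&: X2) = M ->
  cartesian_system M Gw Mw [set X1; X2; X3].
Proof.
move=> n12 n23 n31 g1 g2 g3 s1 s2 s3 cj eI f1 f2 f3; split => //.
- by move=> K; rewrite !inE; case/orP => [/orP[]|] /eqP ->.
- by rewrite bigcap_all3.
move=> K; rewrite !inE; case/orP => [/orP[]|] /eqP ->.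
- by rewrite bigcap3 // (setIidPr _) // subIset ?s2.
- by rewrite set3_rot bigcap3 // (setIidPr _) // subIset ?s3.
- by rewrite set3_rot set3_rot bigcap3 // (setIidPr _) // subIset ?s1.
Qed.
End Generic.

Lemma card3 (I U : finType) (s : I -> {set U}) (K1 K2 K3 : I) (T : {set U}) :
  s K1 != T -> s K2 != T -> s K3 != T ->
  s K1 != s K2 -> s K2 != s K3 -> s K3 != s K1 ->
  #|[set s K | K in [set K1; K2; K3] & s K != T]| = 3.
Proof.
move=> n1 n2 n3 n12 n23 n31.
have -> : [set s K | K in [set K1; K2; K3] & s K != T] = [set s K1; s K2; s K3].
  apply/setP => y; apply/imsetP/idP.
    case=> K; rewrite !inE => /andP[+ _] ->.
    by case/orP => [/orP[]|] /eqP ->; rewrite eqxx ?orbT.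
  rewrite !inE; case/orP => [/orP[]|] /eqP ->.
  - by exists K1; rewrite // !inE eqxx n1.
  - by exists K2; rewrite // !inE eqxx n2 orbT.
  - by exists K3; rewrite // !inE eqxx n3 orbT.
have -> : [set s K1; s K2; s K3] = s K1 |: [set s K2; s K3].
  by apply/setP => y; rewrite !inE orbA.
rewrite cardsU1 cards2 !inE (negbTE n12) eq_sym (negbTE n31) n23.
by [].
Qed.

Lemma pred3 (U : finType) (a b c : U) : a != b -> b != c -> c != a ->
  forall x, (x \in [set a; b; c]) && (x != a) = (x \in b |: [set c]).
Proof.
move=> nab nbc nca x; rewrite !inE; case: (eqVneq x a) => [->|nx] /=.
  by rewrite (negbTE nab) eq_sym (negbTE nca).
by rewrite andbT.
Qed.

Theorem mainTheorem12 (gT : finGroupType) (T A B C : {group gT}) :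
  simple T -> ~~ abelian T ->
  A \proper T -> B \proper T -> C \proper T ->
  A :!=: B -> B :!=: C -> C :!=: A ->
  T :=: A * (B :&: C) -> T :=: B * (C :&: A) -> T :=: C * (A :&: B) ->
  let M := rr gT @* setX (setX T T) T in
  let c := shift gT in
  let C3 := <[c]> in
  let G := M <*> C3 in
  let K1 := rr gT @* setX (setX A B) C in
  let K2 := rr gT @* setX (setX B C) A in
  let K3 := rr gT @* setX (setX C A) B in
  let D := A :&: B :&: C in
  let H := (K1 :&: K2 :&: K3) <*> C3 in
  let Omega := rcosets H G in
  let Gw := 'C_G[H | 'Rs] in
  let Mw := 'C_M[H | 'Rs] in
  let L1 := rr gT @* setX (setX D T) T in
  let L2 := rr gT @* setX (setX T D) T in
  let L3 := rr gT @* setX (setX T T) D in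
  [/\ K1 :&: K2 :&: K3 = rr gT @* setX (setX D D) D /\ C3 \subset 'N(K1 :&: K2 :&: K3),
      [/\ H \in Omega, [transitive G, on Omega | 'Rs], M <| G, minnormal M G
        & [transitive M, on Omega | 'Rs]],
      [/\ cartesian_system M Gw Mw [set K1; K2; K3],
          ~ M_normal M Mw [set K1; K2; K3]
        & forall i : 'I_3, #|Fsys T i [set K1; K2; K3]| = 3]
    & cartesian_system M Gw Mw [set L1; L2; L3] /\ M_normal M Mw [set L1; L2; L3]].
Proof.
move=> simT nabT pA pB pC nAB nBC nCA fA fB fC M c C3 G K1 K2 K3 D H Omega Gw Mw L1 L2 L3.
have injf := rr_injm gT.
have fI X Y : rr gT @* X :&: rr gT @* Y = rr gT @* (X :&: Y) by rewrite injmI.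
have fM X Y : rr gT @* X * rr gT @* Y = rr gT @* (X * Y) by rewrite morphimMl ?subsetT.
have feq X Y : (rr gT @* X == rr gT @* Y) = (X == Y) by rewrite injm_eq ?subsetT.
case/andP: pA => sAT nTA; case/andP: pB => sBT nTB; case/andP: pC => sCT nTC.
have sDT : D \subset T by rewrite /D subIset // subIset ?sAT.
have eD2 : B :&: C :&: A = D by rewrite /D setIC setIA.
have eD3 : C :&: A :&: B = D by rewrite /D -setIA setIC.
have eK : K1 :&: K2 :&: K3 = rr gT @* setX (setX D D) D.
  by rewrite /K1 /K2 /K3 !fI !P3I eD2 eD3.
have cN (X : {set gT}) : c \in 'N(rr gT @* setX (setX X X) X) by apply/normP; rewrite conjP3.
have nDc : C3 \subset 'N(rr gT @* setX (setX D D) D) by rewrite cycle_subG cN.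
have nM : C3 \subset 'N(M) by rewrite cycle_subG cN.
have eH : H = rr gT @* setX (setX D D) D * C3 by rewrite /H eK norm_joinEr.
have eG : G = M * C3 by rewrite /G norm_joinEr.
have sDcM : rr gT @* setX (setX D D) D \subset M by rewrite morphimS ?setXS.
have sHG : H \subset G by rewrite eH eG mulSg.
have eGw : Gw = H by rewrite /Gw astab1Rs; apply/setIidPr.
have eMw : Mw = rr gT @* setX (setX D D) D.
  rewrite /Mw astab1Rs; change (M :&: H = rr gT @* setX (setX D D) D).
  rewrite eH; apply/setP => x; apply/idP/idP.
    rewrite inE => /andP[Mx /mulsgP[d k Dd Ck xe]]; subst x.
    case/cycleP: Ck Mx => n -> Mx.
    have Md := subsetP sDcM d Dd.
    have : c ^+ n \in M.
      move: Mx Md; rewrite /M => Mx Md. rewrite -(groupMl _ Md). exact: Mx.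
    by move/cpow_in->; rewrite mulg1.
  move=> Dx; rewrite inE (subsetP sDcM _ Dx) /= -[x]mulg1 mem_mulg // group1.
have Tn1 : T :!=: 1 by case/simpleP: simT.
have nt3 : rr gT @* setX (setX T T) T :!=: 1.
  have [a Ta a1] := trivgPn _ Tn1.
  apply/trivgPn; exists (rr gT ((a,1),1)).
    by apply: mem_morphim; [rewrite inE | rewrite !in_setX Ta !group1].
  apply/eqP => e; have := congr1 (fun s : {perm _} => s 1) e.
  rewrite rrE perm1 mul1g => -[a1']; by rewrite a1' eqxx in a1.
have sDA : D \subset A by rewrite /D subIset // subsetIl.
have sDB : D \subset B by rewrite /D subIset // subsetIr.
have sDC : D \subset C by rewrite /D subsetIr.
have nGw : Gw \subset rr gT @* setX (setX D D) D * C3 by rewrite eGw eH.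
have nK12 : K1 != K2.
  apply/eqP => /rrP3_eq [e _ _]; by rewrite e eqxx in nAB.
have nK23 : K2 != K3.
  apply/eqP => /rrP3_eq [e _ _]; by rewrite e eqxx in nBC.
have nK31 : K3 != K1.
  apply/eqP => /rrP3_eq [e _ _]; by rewrite e eqxx in nCA.
split.
- by rewrite eK.
- split.
  + have : H :* 1 \in rcosets H G by rewrite mem_rcosets -[1]mulg1 mem_mulg ?group1.
    by rewrite rcoset1.
  + exact: transRs_rcosets.
  + by rewrite /normal /G joing_subl /= join_subG normG nM.
  + apply/mingroupP; split.
      by apply/andP; split => //; rewrite /G join_subG normG nM.
    move=> N /andP[ntN nNG] sNM; apply/eqP; rewrite eqEsubset sNM /=.
    have nNM : N <| M by rewrite /normal sNM (subset_trans (joing_subl _ _) nNG).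
    have nN' := pullback_normal nNM.
    have sN : N \subset rr gT @* setT by apply: subset_trans sNM (morphimS _ (subsetT _)).
    have ntN' : rr gT @*^-1 N :!=: 1.
      apply: contra ntN => /eqP e; by rewrite -(morphpreK sN) e morphim1.
    have sfN : forall x, x \in rr gT @*^-1 N -> shift_fun x \in rr gT @*^-1 N.
      move=> x; rewrite !inE /= => Nx; rewrite -rr_conj memJ_norm //.
      apply: (subsetP nNG); exact: (subsetP (joing_subr _ _)) _ (cycle_id _).
    have := @Kfull gT T simT nabT (rr gT @*^-1 N)%G nN' ntN' sfN.
    by move/(morphimS (rr gT)); rewrite morphpreK.
  + have eO : rcosets H G = rcosets H M.
      apply/setP => X; apply/rcosetsP/rcosetsP => [[g Gg ->]|[m Mm ->]].
        rewrite eG -(normC nM) in Gg; case/mulsgP: Gg => k m Ck Mm ->.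
        have kH : k \in H by rewrite eH -[k]mul1g mem_mulg ?group1.
        by exists m => //; rewrite rcosetM rcoset_id.
      by exists m; rewrite // (subsetP (joing_subl _ _)).
    by rewrite /Omega eO; apply: transRs_rcosets.
- split.
  + apply: (@cart3 _ M Gw Mw K1 K2 K3) => //.
    * exact: groupP.
    * exact: groupP.
    * exact: groupP.
    * by rewrite morphimS // !setXS.
    * by rewrite morphimS // !setXS.
    * by rewrite morphimS // !setXS.
    * apply: (@conj_closed _ Gw _ c (rr gT @* setX (setX A B) C)%G
          (rr gT @* setX (setX B C) A)%G (rr gT @* setX (setX C A) B)%G nGw).
      - by rewrite morphimS // !setXS.
      - by rewrite morphimS // !setXS.
      - by rewrite morphimS // !setXS.
      move=> K; rewrite !inE; case/orP => [/orP[]|] /eqP -> /=; rewrite conjP3 !eqxx ?orbT //.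
    * by rewrite eMw eK.
    * by rewrite /K1 /K2 /K3 !fI !P3I fM P3M -fA -fB -fC.
    * by rewrite /K1 /K2 /K3 !fI !P3I fM P3M -fA -fB -fC.
    * by rewrite /K1 /K2 /K3 !fI !P3I fM P3M -fA -fB -fC.
  + case=> Mi [hMi hprod hK].
    have KS1 : K1 \in [set K1; K2; K3] by rewrite !inE eqxx.
    have KS2 : K2 \in [set K1; K2; K3] by rewrite !inE eqxx ?orbT.
    have KS3 : K3 \in [set K1; K2; K3] by rewrite !inE eqxx ?orbT.
    have M1 : forall J, J \in [set K1; K2; K3] -> 1 \in Mi J.
      by move=> J /hMi [/andP[]].
    have subK : forall K J, K \in [set K1; K2; K3] -> J \in [set K1; K2; K3] ->
        J != K -> Mi J \subset K.
      move=> K J KS JS nJK; rewrite (hK K KS).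
      apply: subset_trans (sub_prod (P := fun J => (J \in [set K1; K2; K3]) && (J != K)) _ _) _.
      - by move=> i /andP[/M1].
      - by rewrite JS nJK.
      apply/subsetP => y Py; rewrite -[y]mul1g mem_mulg // inE M1 //= eMw group1.
    have triv : forall J (X Y Z : {group gT}), J \in [set K1; K2; K3] -> Mi J \subset rr gT @* setX (setX X Y) Z ->
        ~~ (T \subset X) -> ~~ (T \subset Y) -> ~~ (T \subset Z) -> Mi J = 1.
      move=> J X Y Z JS sJ pX pY pZ.
      have [gJ nJ] := hMi J JS.
      exact: (@Mtriv gT (Mi J) T X Y Z simT nabT gJ nJ sJ pX pY pZ).
    have e1 : Mi K1 = 1 by apply: (triv K1 B C A) => //; apply: (subK K2 K1).
    have e2 : Mi K2 = 1 by apply: (triv K2 A B C) => //; apply: (subK K1 K2) => //; rewrite eq_sym.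
    have e3 : Mi K3 = 1 by apply: (triv K3 A B C) => //; apply: (subK K1 K3).
    move: hprod; rewrite big1 => [eM1|J]; last first.
      by rewrite !inE; case/orP => [/orP[]|] /eqP ->.
    by move: nt3; rewrite -/M -eM1 eqxx.
  + move=> i; rewrite /Fsys; apply: card3; rewrite !sigmaP3;
      case: i => [[|[|[|i]]] Hi] //=; apply/eqP => e;
      by [ move: nTA; rewrite -e subxx | move: nTB; rewrite -e subxx
         | move: nTC; rewrite -e subxx | rewrite e eqxx in nAB
         | rewrite e eqxx in nBC | rewrite e eqxx in nCA].
- have nDT : ~~ (T \subset D) by apply: contra nTA => sTD; apply: subset_trans sTD sDA.
  have nL12 : L1 != L2.
    by apply/eqP => /rrP3_eq [e _ _]; have e' : D = T := e; move: nDT; rewrite -{1}e' subxx.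
  have nL23 : L2 != L3.
    by apply/eqP => /rrP3_eq [_ e _]; have e' : D = T := e; move: nDT; rewrite -{1}e' subxx.
  have nL31 : L3 != L1.
    apply/eqP => /rrP3_eq [e _ _]; have sTD : T \subset D by move: (subxx T); rewrite {2}e.
    by rewrite sTD in nDT.
  split.
  + apply: (@cart3 _ M Gw Mw L1 L2 L3) => //.
    * exact: groupP.
    * exact: groupP.
    * exact: groupP.
    * by rewrite morphimS // !setXS.
    * by rewrite morphimS // !setXS.
    * by rewrite morphimS // !setXS.
    * apply: (@conj_closed _ Gw _ c (rr gT @* setX (setX D T) T)%G
          (rr gT @* setX (setX T D) T)%G (rr gT @* setX (setX T T) D)%G nGw).
      - by rewrite morphimS // !setXS.
      - by rewrite morphimS // !setXS.
      - by rewrite morphimS // !setXS.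
      move=> K; rewrite !inE; case/orP => [/orP[]|] /eqP -> /=; rewrite conjP3 !eqxx ?orbT //.
    * rewrite eMw /L1 /L2 /L3 !fI !P3I.
      by rewrite ?(setIidPl sDT) ?(setIidPr sDT) ?setIid ?(setIidPl sDT) ?(setIidPr sDT).
    * rewrite /L1 /L2 /L3 !fI !P3I fM P3M.
      by rewrite ?setIid ?(setIidPl sDT) ?(setIidPr sDT) ?(mulSGid sDT) ?(mulGSid sDT).
    * rewrite /L1 /L2 /L3 !fI !P3I fM P3M.
      by rewrite ?setIid ?(setIidPl sDT) ?(setIidPr sDT) ?(mulSGid sDT) ?(mulGSid sDT).
    * rewrite /L1 /L2 /L3 !fI !P3I fM P3M.
      by rewrite ?setIid ?(setIidPl sDT) ?(setIidPr sDT) ?(mulSGid sDT) ?(mulGSid sDT).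
  + pose Mi := fun K : {set {perm cube3 gT}} => if K == L1 then rr gT @* setX (setX T 1) 1
      else if K == L2 then rr gT @* setX (setX 1 T) 1 else rr gT @* setX (setX 1 1) T.
    have nL21 : L2 != L1 by rewrite eq_sym.
    have nL32 : L3 != L2 by rewrite eq_sym.
    have nL13 : L1 != L3 by rewrite eq_sym.
    have ML1 : Mi L1 = rr gT @* setX (setX T 1) 1 by rewrite /Mi eqxx.
    have ML2 : Mi L2 = rr gT @* setX (setX 1 T) 1 by rewrite /Mi (negbTE nL21) eqxx.
    have ML3 : Mi L3 = rr gT @* setX (setX 1 1) T by rewrite /Mi (negbTE nL31) (negbTE nL32).
    have cen : forall X Y Z X' Y' Z' : {group gT},
        X \subset 'C(X') -> Y \subset 'C(Y') -> Z \subset 'C(Z') ->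
        setX (setX X Y) Z \subset 'C(setX (setX X' Y') Z') by move=> *; apply: centP3.
    exists Mi; split.
    * move=> K; rewrite !inE; case/orP => [/orP[]|] /eqP ->;
        rewrite ?ML1 ?ML2 ?ML3; split; try exact: groupP;
        apply: morphim_normal; apply: normalP3; by rewrite ?normal_refl ?normal1.
    * have eS : [set L1; L2; L3] = L1 |: (L2 |: [set L3]).
        by apply/setP => J; rewrite !inE orbA.
      rewrite eS big_setU1 /=; last by rewrite !inE negb_or nL12 nL13.
      rewrite big_setU1 /=; last by rewrite !inE nL23.
      rewrite big_set1 ML1 ML2 ML3 dprodP3; first last.
      - by rewrite P3I ?setIg1 ?setI1g ?setIid P3_1.
      - by apply: cen; rewrite ?sub1G ?cents1.
      rewrite mul1g mulg1 mul1g dprodP3; first last.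
      - by rewrite P3I ?setIg1 ?setI1g ?setIid P3_1.
      - by apply: cen; rewrite ?sub1G ?cents1.
      by rewrite mulg1 !mul1g.
    * move=> K; rewrite !inE; case/orP => [/orP[]|] /eqP ->.
      - have E : \big[cprod/1]_(J in [set L1; L2; L3] | J != L1) Mi J
            = rr gT @* setX (setX 1 T) T.
          rewrite (eq_bigl _ _ (pred3 nL12 nL23 nL31)).
          rewrite big_setU1 /=; last by rewrite !inE.
          rewrite big_set1 ML2 ML3 cprodP3; last by apply: cen; rewrite ?sub1G ?cents1.
          by rewrite mulg1 mul1g mulg1.
        rewrite (bigcprodW E) ML1 eMw fI P3I fM P3M.
        by rewrite (setIidPr sDT) !setI1g mulg1 !mul1g.
      - have E : \big[cprod/1]_(J in [set L1; L2; L3] | J != L2) Mi J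
            = rr gT @* setX (setX T 1) T.
          rewrite set3_rot (eq_bigl _ _ (pred3 nL23 nL31 nL12)).
          rewrite big_setU1 /=; last by rewrite !inE.
          rewrite big_set1 ML3 ML1 cprodP3; last by apply: cen; rewrite ?sub1G ?cents1.
          by rewrite mulg1 mul1g mulg1.
        rewrite (bigcprodW E) ML2 eMw fI P3I fM P3M.
        by rewrite (setIidPr sDT) !setI1g mulg1 !mul1g.
      - have E : \big[cprod/1]_(J in [set L1; L2; L3] | J != L3) Mi J
            = rr gT @* setX (setX T T) 1.
          rewrite set3_rot set3_rot (eq_bigl _ _ (pred3 nL31 nL12 nL23)).
          rewrite big_setU1 /=; last by rewrite !inE.
          rewrite big_set1 ML1 ML2 cprodP3; last by apply: cen; rewrite ?sub1G ?cents1.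
          by rewrite mulg1 mul1g mulg1.
        rewrite (bigcprodW E) ML3 eMw fI P3I fM P3M.
        by rewrite (setIidPr sDT) !setI1g mulg1 !mul1g.
Qed.
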